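(* The class of right normal bands with intersection and update is a proper quasivariety (it is not closed under homomorphic images, hence not axiomatisable by identities), and so is the class of 1-stacks with intersection and update.
   Context: A right normal band is a semigroup $(A,\circ)$ with $x\circ x=x$ and $(x\circ y)\circ z=(y\circ x)\circ z$. A right normal band with intersection $(A,\circ,\cap)$: right normal band $(A,\circ)$, semilattice $(A,\cap)$, $(x\cap y)\circ x=x\cap y$, $x\circ(y\cap z)=(x\circ y)\cap z$. A right normal band with intersection and update $(A,\circ,\cap,\diamond)$: a right normal band with intersection satisfying $s=(s\diamond t)\circ s$, $s\diamond t=s\diamond(s\diamond t)$, $s\circ t=t\circ(s\diamond t)$, and the quasi-identity $(x\cap(x\diamond y))\circ a=(x\cap(x\diamond y))\circ b\ \&\ y\circ a=y\circ b\Rightarrow x\circ a=x\circ b$. A 1-stack with intersection and update $(A,\cdot,\circ,\cap,\diamond)$: $(A,\circ,\cap,\diamond)$ a right normal band with intersection and update, $\cdot$ associative (juxtaposition), $a\circ(bc)=(a\circ b)c$, $a(b\circ c)=ab\circ ac$, $s(t\cap u)=st\cap su$, $s(t\diamond u)=st\diamond su$. *)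

(* Defs.v *)
Definition is_rnb {A : Type} (comp : A -> A -> A) : Prop :=
  (forall x y z, comp (comp x y) z = comp x (comp y z)) /\
  (forall x, comp x x = x) /\
  (forall x y z, comp (comp x y) z = comp (comp y x) z).

Definition is_semilattice {A : Type} (cap : A -> A -> A) : Prop :=
  (forall x y z, cap (cap x y) z = cap x (cap y z)) /\
  (forall x y, cap x y = cap y x) /\
  (forall x, cap x x = x).

Definition is_rnbi {A : Type} (comp cap : A -> A -> A) : Prop :=
  is_rnb comp /\ is_semilattice cap /\
  (forall x y, comp (cap x y) x = cap x y) /\
  (forall x y z, comp x (cap y z) = cap (comp x y) z).

Definition is_rnbiu {A : Type} (comp cap upd : A -> A -> A) : Prop :=
  is_rnbi comp cap /\
  (forall s t, s = comp (upd s t) s) /\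
  (forall s t, upd s t = upd s (upd s t)) /\
  (forall s t, comp s t = comp t (upd s t)) /\
  (forall x y a b,
      comp (cap x (upd x y)) a = comp (cap x (upd x y)) b ->
      comp y a = comp y b ->
      comp x a = comp x b).

(** 1-stack with intersection and update (A, dot, comp, cap, upd);
    dot is juxtaposition. *)
Definition is_1stack_iu {A : Type} (dot comp cap upd : A -> A -> A) : Prop :=
  is_rnbiu comp cap upd /\
  (forall a b c, dot (dot a b) c = dot a (dot b c)) /\
  (forall a b c, comp a (dot b c) = dot (comp a b) c) /\
  (forall a b c, dot a (comp b c) = comp (dot a b) (dot a c)) /\
  (forall s t u, dot s (cap t u) = cap (dot s t) (dot s u)) /\
  (forall s t u, dot s (upd t u) = upd (dot s t) (dot s u)).

Definition is_hom3 {A B : Type}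
  (compA capA updA : A -> A -> A) (compB capB updB : B -> B -> B)
  (f : A -> B) : Prop :=
  (forall x y, f (compA x y) = compB (f x) (f y)) /\
  (forall x y, f (capA x y) = capB (f x) (f y)) /\
  (forall x y, f (updA x y) = updB (f x) (f y)).

Definition is_hom4 {A B : Type}
  (dotA compA capA updA : A -> A -> A) (dotB compB capB updB : B -> B -> B)
  (f : A -> B) : Prop :=
  (forall x y, f (dotA x y) = dotB (f x) (f y)) /\
  is_hom3 compA capA updA compB capB updB f.

Definition surj {A B : Type} (f : A -> B) : Prop := forall b, exists a, f a = b.

Definition rnbiu_not_closed_under_hom_images : Prop :=
  exists (A B : Type) (compA capA updA : A -> A -> A)
         (compB capB updB : B -> B -> B) (f : A -> B),
    is_rnbiu compA capA updA /\
    is_hom3 compA capA updA compB capB updB f /\ surj f /\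
    ~ is_rnbiu compB capB updB.

Definition stack_iu_not_closed_under_hom_images : Prop :=
  exists (A B : Type) (dotA compA capA updA : A -> A -> A)
         (dotB compB capB updB : B -> B -> B) (f : A -> B),
    is_1stack_iu dotA compA capA updA /\
    is_hom4 dotA compA capA updA dotB compB capB updB f /\ surj f /\
    ~ is_1stack_iu dotB compB capB updB.

(* Main.v *)
Require Import Defs.

Inductive A := a0|a1|a2|a3|a4|a5.
Inductive B := b0|b1|b2|b3|b4.

Definition compA (x y : A) : A := match x, y with
 | a0, a0 => a0
 | a0, a1 => a1
 | a0, a2 => a2
 | a0, a3 => a3
 | a0, a4 => a4
 | a0, a5 => a5
 | a1, a0 => a0
 | a1, a1 => a1
 | a1, a2 => a2
 | a1, a3 => a3
 | a1, a4 => a4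
 | a1, a5 => a5
 | a2, a0 => a2
 | a2, a1 => a2
 | a2, a2 => a2
 | a2, a3 => a5
 | a2, a4 => a5
 | a2, a5 => a5
 | a3, a0 => a3
 | a3, a1 => a4
 | a3, a2 => a5
 | a3, a3 => a3
 | a3, a4 => a4
 | a3, a5 => a5
 | a4, a0 => a3
 | a4, a1 => a4
 | a4, a2 => a5
 | a4, a3 => a3
 | a4, a4 => a4
 | a4, a5 => a5
 | a5, a0 => a5
 | a5, a1 => a5
 | a5, a2 => a5
 | a5, a3 => a5
 | a5, a4 => a5
 | a5, a5 => a5
 end.
Definition compB (x y : B) : B := match x, y with
 | b0, b0 => b0
 | b0, b1 => b1
 | b0, b2 => b2
 | b0, b3 => b3
 | b0, b4 => b4
 | b1, b0 => b0
 | b1, b1 => b1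
 | b1, b2 => b2
 | b1, b3 => b3
 | b1, b4 => b4
 | b2, b0 => b2
 | b2, b1 => b2
 | b2, b2 => b2
 | b2, b3 => b2
 | b2, b4 => b2
 | b3, b0 => b3
 | b3, b1 => b4
 | b3, b2 => b2
 | b3, b3 => b3
 | b3, b4 => b4
 | b4, b0 => b3
 | b4, b1 => b4
 | b4, b2 => b2
 | b4, b3 => b3
 | b4, b4 => b4
 end.
Definition capA (x y : A) : A := match x, y with
 | a0, a0 => a0
 | a0, a1 => a2
 | a0, a2 => a2
 | a0, a3 => a3
 | a0, a4 => a5
 | a0, a5 => a5
 | a1, a0 => a2
 | a1, a1 => a1
 | a1, a2 => a2
 | a1, a3 => a5
 | a1, a4 => a4
 | a1, a5 => a5
 | a2, a0 => a2
 | a2, a1 => a2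
 | a2, a2 => a2
 | a2, a3 => a5
 | a2, a4 => a5
 | a2, a5 => a5
 | a3, a0 => a3
 | a3, a1 => a5
 | a3, a2 => a5
 | a3, a3 => a3
 | a3, a4 => a5
 | a3, a5 => a5
 | a4, a0 => a5
 | a4, a1 => a4
 | a4, a2 => a5
 | a4, a3 => a5
 | a4, a4 => a4
 | a4, a5 => a5
 | a5, a0 => a5
 | a5, a1 => a5
 | a5, a2 => a5
 | a5, a3 => a5
 | a5, a4 => a5
 | a5, a5 => a5
 end.
Definition capB (x y : B) : B := match x, y with
 | b0, b0 => b0
 | b0, b1 => b2
 | b0, b2 => b2
 | b0, b3 => b3
 | b0, b4 => b2
 | b1, b0 => b2
 | b1, b1 => b1
 | b1, b2 => b2
 | b1, b3 => b2
 | b1, b4 => b4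
 | b2, b0 => b2
 | b2, b1 => b2
 | b2, b2 => b2
 | b2, b3 => b2
 | b2, b4 => b2
 | b3, b0 => b3
 | b3, b1 => b2
 | b3, b2 => b2
 | b3, b3 => b3
 | b3, b4 => b2
 | b4, b0 => b2
 | b4, b1 => b4
 | b4, b2 => b2
 | b4, b3 => b2
 | b4, b4 => b4
 end.
Definition updA (x y : A) : A := match x, y with
 | a0, a0 => a0
 | a0, a1 => a1
 | a0, a2 => a0
 | a0, a3 => a0
 | a0, a4 => a1
 | a0, a5 => a0
 | a1, a0 => a0
 | a1, a1 => a1
 | a1, a2 => a1
 | a1, a3 => a0
 | a1, a4 => a1
 | a1, a5 => a1
 | a2, a0 => a2
 | a2, a1 => a2
 | a2, a2 => a2
 | a2, a3 => a2
 | a2, a4 => a2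
 | a2, a5 => a2
 | a3, a0 => a3
 | a3, a1 => a4
 | a3, a2 => a3
 | a3, a3 => a3
 | a3, a4 => a4
 | a3, a5 => a3
 | a4, a0 => a3
 | a4, a1 => a4
 | a4, a2 => a4
 | a4, a3 => a3
 | a4, a4 => a4
 | a4, a5 => a4
 | a5, a0 => a5
 | a5, a1 => a5
 | a5, a2 => a5
 | a5, a3 => a5
 | a5, a4 => a5
 | a5, a5 => a5
 end.
Definition updB (x y : B) : B := match x, y with
 | b0, b0 => b0
 | b0, b1 => b1
 | b0, b2 => b0
 | b0, b3 => b0
 | b0, b4 => b1
 | b1, b0 => b0
 | b1, b1 => b1
 | b1, b2 => b1
 | b1, b3 => b0
 | b1, b4 => b1
 | b2, b0 => b2
 | b2, b1 => b2
 | b2, b2 => b2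
 | b2, b3 => b2
 | b2, b4 => b2
 | b3, b0 => b3
 | b3, b1 => b4
 | b3, b2 => b3
 | b3, b3 => b3
 | b3, b4 => b4
 | b4, b0 => b3
 | b4, b1 => b4
 | b4, b2 => b4
 | b4, b3 => b3
 | b4, b4 => b4
 end.
Definition f (x : A) : B := match x with | a0 => b0 | a1 => b1 | a2 => b2 | a3 => b3 | a4 => b4 | a5 => b2 end.

Lemma A_rnbiu : is_rnbiu compA capA updA.
Proof.
  repeat split;
  try (intros x; destruct x; reflexivity);
  try (intros x y; destruct x, y; reflexivity);
  try (intros x y z; destruct x, y, z; reflexivity).
  intros x y a b; destruct x, y, a, b; simpl; intros H1 H2;
  try reflexivity; try discriminate H1; try discriminate H2.
Qed.

Lemma A_hom : is_hom3 compA capA updA compB capB updB f.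
Proof. repeat split; intros x y; destruct x, y; reflexivity. Qed.

Lemma f_surj : surj f.
Proof. intros b; destruct b; [exists a0|exists a1|exists a2|exists a3|exists a4]; reflexivity. Qed.

Lemma B_not : ~ is_rnbiu compB capB updB.
Proof.
  intros [_ [_ [_ [_ Q]]]].
  specialize (Q b0 b4 b0 b3 eq_refl eq_refl). discriminate Q.
Qed.

Lemma A_stack : is_1stack_iu (fun x _ => x) compA capA updA.
Proof.
  split; [exact A_rnbiu|].
  repeat split; try (intros x y z; destruct x, y, z; reflexivity).
Qed.

Theorem proposition5p10 :
  rnbiu_not_closed_under_hom_images /\ stack_iu_not_closed_under_hom_images.
Proof.
  split.
  - exists A, B, compA, capA, updA, compB, capB, updB, f.
    split; [exact A_rnbiu|split; [exact A_hom|split; [exact f_surj|exact B_not]]].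
  - exists A, B, (fun x _ => x), compA, capA, updA, (fun x _ => x), compB, capB, updB, f.
    split; [exact A_stack|].
    split; [split; [intros; reflexivity|exact A_hom]|].
    split; [exact f_surj|].
    intros [H _]; exact (B_not H).
Qed.
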